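(* The function $h$ satisfies $h(1)=0$, $h(2)=1$, and $h(n)=h\left(2^{\lceil\log_2 n\rceil}-n\right)+1$ for every integer $n>2$.
   Context: For $k\ge0$ and $0\le m<2^k$ let $\beta_k(m)\in\{0,1\}^k$ be the point whose $j$-th coordinate is the binary digit of $m$ of weight $2^{k-j}$. For $n\ge2$ with $k=\lceil\log_2 n\rceil$, a pair $(n_0,n_1)$ of integers with $n=n_0+n_1$, $n_0\ge n_1\ge1$ is a hypercubic bipartition (HCBP) of $n$ if for some $i\in\{1,\dots,k\}$ the hyperplane $x_i=1/2$ splits the points $\beta_k(0),\dots,\beta_k(n-1)$ into $n_0$ points on one side and $n_1$ on the other. For $n\ge 2$, $h(n)$ denotes the number of HCBPs of $n$; by convention $h(1)=0$ and $h(0)=0$. *)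

(* Defs.v *)
From mathcomp Require Import all_boot.

Definition clog2 (n : nat) : nat := up_log 2 n.

(* j-th coordinate (1 <= j <= k) of beta_k(m): binary digit of m of weight 2^(k-j). *)
Definition beta_coord (k m j : nat) : bool := odd (m %/ 2 ^ (k - j)).

(* number of points among beta_k(0..n-1) on the side x_j > 1/2 (coordinate 1). *)
Definition side1 (n k j : nat) : nat :=
  count (fun m => beta_coord k m j) (iota 0 n).

Definition is_hcbp (n n0 n1 : nat) : bool :=
  let k := clog2 n in
  [&& n == n0 + n1, n1 <= n0, 0 < n1 &
      has (fun j => let c := side1 n k j in
             ((c == n0) && (n - c == n1)) || ((c == n1) && (n - c == n0)))
          (iota 1 k)].

(* h(n) = number of HCBPs of n for n >= 2; h(0) = h(1) = 0.
   Candidate pairs have components <= n, so we enumerate [0..n]^2. *)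
Definition h (n : nat) : nat :=
  if n < 2 then 0
  else count (fun p : nat * nat => is_hcbp n p.1 p.2)
             [seq (a, b) | a <- iota 0 n.+1, b <- iota 0 n.+1].

(* Main.v *)
Require Import Defs.
From mathcomp Require Import all_boot.
From mathcomp Require Import zify.

Definition cc (n b : nat) : nat := count (fun m => odd (m %/ 2 ^ b)) (iota 0 n).

Lemma ccS n b : cc n.+1 b = cc n b + odd (n %/ 2 ^ b).
Proof. by rewrite /cc -[n.+1]addn1 iotaD count_cat /= addn0. Qed.

Lemma cc_le n b : cc n b <= n.
Proof. by rewrite /cc (leq_trans (count_size _ _)) // size_iota. Qed.

Lemma count_none (T : eqType) (P : pred T) (s : seq T) :
  (forall x, x \in s -> ~~ P x) -> count P s = 0.
Proof.
move=> H; apply/eqP; rewrite -[_ == 0]negbK -lt0n -has_count; apply/hasPn => x.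
exact: H.
Qed.

Lemma cc_small n b : n <= 2 ^ b -> cc n b = 0.
Proof.
move=> hn; rewrite /cc; apply: count_none => m; rewrite mem_iota => /andP[_ hm].
by rewrite divn_small //; lia.
Qed.

Lemma compl_bit k b m : b < k -> m < 2 ^ k ->
  odd ((2 ^ k - 1 - m) %/ 2 ^ b) = ~~ odd (m %/ 2 ^ b).
Proof.
move=> hb hm.
have p0 : 0 < 2 ^ b by rewrite expn_gt0.
have hk : 2 ^ k = 2 ^ (k - b) * 2 ^ b by rewrite -expnD subnK // ltnW.
set p := 2 ^ b in p0 hk *; set E := 2 ^ (k - b) in hk.
have Ee : E = 2 * 2 ^ (k - b).-1 by rewrite /E -expnS prednK // subn_gt0.
have hq : m %/ p < E by rewrite ltn_divLR // -hk.
have hr : m %% p < p by rewrite ltn_mod.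
have hm' := divn_eq m p.
set q := m %/ p in hq hm' *; set r := m %% p in hr hm' *.
have -> : 2 ^ k - 1 - m = (E - 1 - q) * p + (p - 1 - r).
  rewrite hk hm' !mulnBl; nia.
rewrite divnMDl // divn_small; last by lia.
rewrite addn0 -subnDA oddB; last by lia.
by rewrite Ee mul2n odd_double add1n /=.
Qed.

Lemma cc_compl k b n' : b < k -> n' <= 2 ^ k ->
  cc (2 ^ k - n') b + n' = cc (2 ^ k) b + cc n' b.
Proof.
move=> hb; elim: n' => [|n IH] hn; first by rewrite subn0 addn0 /cc.
have := IH (ltnW hn).
have -> : 2 ^ k - n = (2 ^ k - n.+1).+1 by lia.
rewrite !ccS.
have -> : 2 ^ k - n.+1 = 2 ^ k - 1 - n by lia.
rewrite compl_bit //; case: (odd _) => /=; lia.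
Qed.

Lemma cc_full k b : b < k -> cc (2 ^ k) b = 2 ^ k.-1.
Proof.
move=> hb; have := @cc_compl k b (2 ^ k) hb (leqnn (2 ^ k)).
rewrite subnn /cc /= => e.
have : 2 ^ k = 2 * 2 ^ k.-1 by rewrite -expnS prednK //; lia.
rewrite -/(cc _ _) in e *; lia.
Qed.

Definition Q n a := [&& n - a <= a, 0 < n - a &
  has (fun b => (cc n b == a) || (cc n b + a == n)) (iota 0 (clog2 n))].

Lemma has_shift k (P : nat -> bool) :
  has (fun j => P (k - j)) (iota 1 k) = has P (iota 0 k).
Proof.
apply/hasP/hasP => [[j] | [b]]; rewrite mem_iota => hj hP.
  by exists (k - j) => //; rewrite mem_iota; lia.
exists (k - b); first by rewrite mem_iota; lia.
by rewrite subKn //; lia.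
Qed.

Lemma hcbpE n a b : a <= n -> is_hcbp n a b = (b == n - a) && Q n a.
Proof.
move=> ha; rewrite /is_hcbp /Q.
have -> : has (fun j : nat =>
     ((side1 n (clog2 n) j == a) && (n - side1 n (clog2 n) j == b))
     || ((side1 n (clog2 n) j == b) && (n - side1 n (clog2 n) j == a)))
     (iota 1 (clog2 n)) =
   has (fun j => ((cc n j == a) && (n - cc n j == b))
     || ((cc n j == b) && (n - cc n j == a))) (iota 0 (clog2 n)).
  by rewrite -has_shift.
case hb: (b == n - a); last first.
  by move/eqP: hb => hb; case: eqP => //; lia.
move/eqP: hb => ->; rewrite /=.
have -> : (n == a + (n - a)) = true by apply/eqP; lia.
congr (_ && _); rewrite (@eq_has _ _ (fun b0 => (cc n b0 == a) || (cc n b0 + a == n))) // => j /=.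
have := cc_le n j; set c := cc n j => hc.
by do ![case: eqP => ? /=]; lia.
Qed.

Lemma count_pairs (P : nat * nat -> bool) (R : pred nat) s t :
  (forall a, a \in s -> count (fun b => P (a, b)) t = R a) ->
  count P [seq (a, b) | a <- s, b <- t] = count R s.
Proof.
elim: s => [|x s IH] H //=.
rewrite count_cat count_map IH; last by move=> a ha; apply: H; rewrite inE ha orbT.
by rewrite (H x) ?inE ?eqxx.
Qed.

Lemma hE n : h n = count (Q n) (iota 0 n.+1).
Proof.
case: (ltnP n 2) => hn.
  by rewrite /h hn; case: n hn => [|[|]] //= _; rewrite /Q.
rewrite /h ltnNge hn; apply: (@count_pairs (fun p => is_hcbp n p.1 p.2)) => a; rewrite mem_iota => /andP[_ ha].
rewrite (eq_count (a2 := fun b => (b == n - a) && Q n a)); last first.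
  by move=> b /=; rewrite hcbpE.
case: (Q n a).
  rewrite (eq_count (a2 := pred1 (n - a))); last by move=> b /=; rewrite andbT.
  by rewrite count_uniq_mem ?iota_uniq // mem_iota; apply/eqP; rewrite /=; lia.
by apply: count_none => b _; rewrite andbF.
Qed.

Lemma rec n : 2 < n -> h n = h (2 ^ clog2 n - n) + 1.
Proof.
move=> hn.
have [hlo hhi] : 2 ^ (clog2 n).-1 < n /\ n <= 2 ^ clog2 n.
  by have /andP[] := @up_log_bounds 2 n isT (ltnW hn).
set k := clog2 n in hlo hhi *.
have k2 : 1 < k.
  case: k hlo hhi => [|[|k]] //= _; rewrite ?expn0 ?expn1; lia.
set K := 2 ^ k.-1 in hlo.
have hK : 2 ^ k = 2 * K by rewrite /K -expnS prednK //; lia.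
set n' := 2 ^ k - n.
have hn' : n' < K by rewrite /n'; lia.
have hnn : n = 2 ^ k - n' by rewrite /n'; lia.
have k'le : clog2 n' <= k.-1 by apply: up_log_min => //; lia.
have k'P : n' <= 2 ^ clog2 n' by apply: up_logP.
have cn : forall b, b < k -> cc n b + n' = K + cc n' b.
  move=> b hb; rewrite hnn cc_compl // ?cc_full //; lia.
have cz : forall b, clog2 n' <= b -> cc n' b = 0.
  move=> b hb; apply: cc_small; apply: (leq_trans k'P); by rewrite leq_exp2l.
rewrite !hE.
have -> : n.+1 = (K - n') + (n'.+1 + (K - n')) by lia.
rewrite !iotaD !count_cat.
rewrite count_none; last first.
  move=> a; rewrite mem_iota => /andP[_ ha]; rewrite /Q; apply/negP => /and3P[h1 _ _]; lia.
rewrite add0n (@count_none _ _ (iota _ (K - n'))); last first.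
  move=> a; rewrite mem_iota => /andP[ha _]; rewrite /Q.
  apply/negP => /and3P[_ _ /hasP[b]]; rewrite mem_iota => /andP[_ hb] /orP[] /eqP.
    by have := cn b hb; have := cc_le n' b; lia.
  by have := cn b hb; have := cc_le n' b; lia.
rewrite addn0 add0n.
have -> : iota (K - n') n'.+1 = map (addn (K - n')) (iota 0 n'.+1) by rewrite -iotaDl addn0.
rewrite count_map.
rewrite (@eq_in_count _ _ (fun v => (v == n') || Q n' v)); last first.
  move=> v; rewrite mem_iota => /andP[_ hv] /=.
  case: (v =P n') => [->|hvn] /=.
    rewrite /Q; apply/and3P; split; [lia | lia |].
    apply/hasP; exists k.-1; first by rewrite mem_iota; lia.
    have := cn k.-1 (ltac:(lia)); rewrite cz // => e.
    apply/orP; right; apply/eqP; lia.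
  rewrite /Q; apply/and3P/and3P => [[h1 h2 /hasP[b]] | [h1 h2 /hasP[b]]];
      rewrite mem_iota => /andP[_ hb] hP.
    split; [lia | lia |]; apply/hasP.
    have hbk : b < clog2 n'.
      rewrite ltnNge; apply/negP => /cz e.
      have := cn b hb; rewrite e; move: hP => /orP[] /eqP; lia.
    exists b; first by rewrite mem_iota; lia.
    have := cn b hb; move: hP => /orP[] /eqP => e e'; apply/orP; [left|right]; apply/eqP; lia.
  split; [lia | lia |]; apply/hasP.
  exists b; first by rewrite mem_iota; lia.
  have := cn b (ltac:(lia)); move: hP => /orP[] /eqP => e e'; apply/orP; [left|right]; apply/eqP; lia.
rewrite -[n'.+1]addn1 !iotaD !count_cat /= add0n.
rewrite (@eq_in_count _ _ (Q n') (iota 0 n')); last first.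
  by move=> v; rewrite mem_iota => /andP[_ hv] /=; case: eqP => //; lia.
have -> : Q n' n' = false by rewrite /Q subnn.
by rewrite eqxx orTb !addn0 addn1.
Qed.

Theorem corollary16 :
  h 1 = 0 /\ h 2 = 1 /\
  (forall n : nat, 2 < n -> h n = h (2 ^ clog2 n - n) + 1).
Proof.
split; first by [].
split; first by vm_compute.
exact: rec.
Qed.
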